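(* Let $f:\mathbb{R}^n\to\mathbb{R}\cup\{+\infty\}$ have a nonempty convex domain and let $S:\mathbb{R}^n\to\mathbb{R}\cup\{+\infty\}$ be even. If $f$ is directionally $S$-smooth, then for all $x_0,x_1\in\mathrm{dom}\,f$ and all $y_0\in\partial f(x_0)$, $y_1\in\partial f(x_1)$, \[ S^*(y_1-y_0)\le S(x_1-x_0). \]
   Context: $f$ is directionally $S$-smooth if $f((1-t)x_0+tx_1)+t(1-t)S(x_1-x_0)\ge(1-t)f(x_0)+tf(x_1)$ for all $t\in(0,1)$ and all $x_0,x_1\in\mathbb{R}^n$ with $(1-t)x_0+tx_1\in\mathrm{dom} f$. The subdifferential $\partial f(x)$ is the set of $a\in\mathbb{R}^n$ with $f(y)\ge f(x)+\langle a,y-x\rangle$ for all $y\in\mathbb{R}^n$ (possibly empty, $f$ not assumed convex). $S^*(v)=\sup_{u\in\mathbb{R}^n}\{\langle u,v\rangle-S(u)\}$. *)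

(* Defs.v *)
From HB Require Import structures.
From mathcomp Require Import all_boot all_order all_algebra.
From mathcomp Require Import all_classical all_reals ereal.
Set Implicit Arguments. Unset Strict Implicit. Unset Printing Implicit Defensive.
Import Order.TTheory GRing.Theory Num.Theory.
Local Open Scope ring_scope.
Local Open Scope classical_set_scope.

Definition dotv {R : realType} {n : nat} (u v : 'rV[R]_n) : R :=
  \sum_(i < n) u ord0 i * v ord0 i.

(* f : R^n -> R ∪ {+oo} *)
Definition no_minus_infty {R : realType} {n : nat} (f : 'rV[R]_n -> \bar R) :=
  forall x, f x != -oo%E.

Definition dom {R : realType} {n : nat} (f : 'rV[R]_n -> \bar R) : set 'rV[R]_n :=
  [set x | (f x < +oo)%E].

Definition convex_set {R : realType} {n : nat} (A : set 'rV[R]_n) :=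
  forall x y t, A x -> A y -> 0 <= t <= 1 -> A ((1 - t) *: x + t *: y).

Definition even_fun {R : realType} {n : nat} (S : 'rV[R]_n -> \bar R) :=
  forall u, S (- u) = S u.

Definition dir_smooth {R : realType} {n : nat} (S f : 'rV[R]_n -> \bar R) :=
  forall (t : R) (x0 x1 : 'rV[R]_n), 0 < t < 1 ->
    dom f ((1 - t) *: x0 + t *: x1) ->
    ((1 - t)%:E * f x0 + t%:E * f x1 <=
     f ((1 - t) *: x0 + t *: x1)%R + (t * (1 - t))%:E * S (x1 - x0)%R)%E.

Definition subdiff {R : realType} {n : nat} (f : 'rV[R]_n -> \bar R) (x : 'rV[R]_n)
  : set 'rV[R]_n :=
  [set a | forall y, (f x + (dotv a (y - x)%R)%:E <= f y)%E].

Definition conj_fun {R : realType} {n : nat} (S : 'rV[R]_n -> \bar R) (v : 'rV[R]_n)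
  : \bar R :=
  ereal_sup [set ((dotv u v)%:E - S u)%E | u in [set: 'rV[R]_n]].

(* Main.v *)
Require Import Defs.
From HB Require Import structures.
From mathcomp Require Import all_boot all_order all_algebra.
From mathcomp Require Import all_classical all_reals ereal.
From mathcomp Require Import ring lra.
Import Order.TTheory GRing.Theory Num.Theory.
Local Open Scope ring_scope.
Local Open Scope classical_set_scope.

Section Aux.
Variables (R : realType) (n : nat).
Implicit Types (a b c : 'rV[R]_n).

Lemma dotvD a b c : dotv a (b + c) = dotv a b + dotv a c.
Proof. rewrite /dotv -big_split /=; apply: eq_bigr => i _; rewrite mxE; ring. Qed.
Lemma dotvZ a k b : dotv a (k *: b) = k * dotv a b.
Proof. rewrite /dotv mulr_sumr; apply: eq_bigr => i _; rewrite mxE; ring. Qed.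
Lemma dotvN a b : dotv a (- b) = - dotv a b.
Proof. rewrite /dotv -sumrN; apply: eq_bigr => i _; rewrite mxE; ring. Qed.
Lemma dotvB a b c : dotv a (b - c) = dotv a b - dotv a c.
Proof. by rewrite dotvD dotvN. Qed.
Lemma dotvBl a b c : dotv (a - b) c = dotv a c - dotv b c.
Proof. rewrite /dotv -sumrB; apply: eq_bigr => i _; rewrite !mxE; ring. Qed.

Lemma dotvC a b : dotv a b = dotv b a.
Proof. by rewrite /dotv; apply: eq_bigr => i _; rewrite mulrC. Qed.

Lemma smooth_step (f S : 'rV[R]_n -> \bar R) (t : R) x w (A s L0 L1 : R) :
  dir_smooth S f -> 0 < t < 1 -> f x = A%:E -> S w = s%:E ->
  (L0%:E <= f (x - t *: w)%R)%E -> (L1%:E <= f (x + (1 - t) *: w)%R)%E ->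
  (1 - t) * L0 + t * L1 <= A + t * (1 - t) * s.
Proof.
move=> hs /andP[t0 t1] fx Sw h0 h1.
have E1 : (1 - t) *: (x - t *: w) + t *: (x + (1 - t) *: w) = x.
  by apply/rowP => i; rewrite !mxE; ring.
have E2 : (x + (1 - t) *: w) - (x - t *: w) = w.
  by apply/rowP => i; rewrite !mxE; ring.
have hd : dom f ((1 - t) *: (x - t *: w) + t *: (x + (1 - t) *: w)).
  by rewrite E1 /dom /= fx ltry.
have := hs t _ _ (ltac:(by apply/andP)) hd.
rewrite E1 E2 fx Sw -lee_fin.
apply: le_trans; rewrite EFinD EFinM EFinM.
have p1 : (0 < (1 - t)%:E)%E by rewrite lte_fin subr_gt0.
have p2 : (0 < t%:E)%E by rewrite lte_fin.
apply: leeD.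
  by rewrite lee_pmul2l.
by rewrite lee_pmul2l.
Qed.

Lemma limit_arg (c e : R) :
  (forall t, 0 < t < 1 -> (1 - t) * c <= t * e) -> c <= 0.
Proof.
move=> H; rewrite leNgt; apply/negP => c0.
pose t := c / (2 * (c + `|e|)).
have ce : 0 < c + `|e| by have := normr_ge0 e; lra.
have t0 : 0 < t by rewrite /t divr_gt0 // mulr_gt0.
have tE : t * (2 * (c + `|e|)) = c by rewrite /t mulfVK // gt_eqF // mulr_gt0.
have t1 : t < 1.
  have : 0 <= `|e| := normr_ge0 e. nra.
have := H t (ltac:(by apply/andP)).
have : t * e <= t * `|e| by rewrite ler_pM2l // ler_norm.
nra.
Qed.

End Aux.

Theorem proposition2p12 (R : realType) (n : nat) (f S : 'rV[R]_n -> \bar R) :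
  no_minus_infty f -> dom f !=set0 -> convex_set (dom f) ->
  no_minus_infty S -> even_fun S ->
  dir_smooth S f ->
  forall x0 x1 y0 y1 : 'rV[R]_n,
    dom f x0 -> dom f x1 -> subdiff f x0 y0 -> subdiff f x1 y1 ->
    (conj_fun S (y1 - y0)%R <= S (x1 - x0)%R)%E.
Proof.
move=> fm _ _ Sm Sev hs x0 x1 y0 y1 d0 d1 s0 s1.
apply: ge_ereal_sup => _ [u _ <-].
case Su: (S u) => [su| |]; last by have := Sm u; rewrite Su.
  2: by rewrite addeNy leNye.
set v := x1 - x0.
case Sv: (S v) => [sv| |]; last by have := Sm v; rewrite Sv.
  2: by rewrite leey.
case f0: (f x0) => [a0| |]; last by have := fm x0; rewrite f0.
  2: by move: d0; rewrite /dom /= f0.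
case f1: (f x1) => [a1| |]; last by have := fm x1; rewrite f1.
  2: by move: d1; rewrite /dom /= f1.
rewrite -EFinD lee_fin.
suff : dotv u (y1 - y0) - su - sv <= 0 by lra.
apply: (@limit_arg _ _ (dotv v (y1 - y0))) => t ht.
have Sw : S (- u) = su%:E by rewrite Sev.
have e1 : x1 - t *: - u - x1 = t *: u by apply/rowP => i; rewrite !mxE; ring.
have e2 : x1 + (1 - t) *: - u - x0 = v - (1 - t) *: u
  by apply/rowP => i; rewrite !mxE; ring.
have e3 : x0 - t *: v - x0 = - (t *: v) by apply/rowP => i; rewrite !mxE; ring.
have e4 : x0 + (1 - t) *: v - x1 = - (t *: v)
  by apply/rowP => i; rewrite /v !mxE; ring.
have HA := @smooth_step R n f S t x1 (- u) a1 su (a1 + t * dotv y1 u)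
  (a0 + dotv y0 v - (1 - t) * dotv y0 u) hs ht f1 Sw.
have HB := @smooth_step R n f S t x0 v a0 sv (a0 - t * dotv y0 v)
  (a1 - t * dotv y1 v) hs ht f0 Sv.
have hA : (1 - t) * (a1 + t * dotv y1 u)
   + t * (a0 + dotv y0 v - (1 - t) * dotv y0 u) <= a1 + t * (1 - t) * su.
  apply: HA.
    by have := s1 (x1 - t *: - u); rewrite e1 f1 dotvZ -EFinD.
  by have := s0 (x1 + (1 - t) *: - u); rewrite e2 f0 dotvB dotvZ -EFinD => h; apply: le_trans h; rewrite lee_fin; lra.
have hB : (1 - t) * (a0 - t * dotv y0 v) + t * (a1 - t * dotv y1 v)
   <= a0 + t * (1 - t) * sv.
  apply: HB.
    by have := s0 (x0 - t *: v); rewrite e3 f0 dotvN dotvZ -EFinD.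
  by have := s1 (x0 + (1 - t) *: v); rewrite e4 f1 dotvN dotvZ -EFinD.
rewrite (@dotvC R n u) (@dotvC R n v) !dotvBl.
move: ht => /andP[t0 t1].
have key : t * ((1 - t) * (dotv y1 u - dotv y0 u - su - sv)
   - t * (dotv y1 v - dotv y0 v)) <= 0 by nra.
rewrite pmulr_rle0 // in key; lra.
Qed.
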